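(* Let $n\ge1$, $k\ge 1$, and let $s_1,\dots,s_k$ be nonnegative integers with $S:=\sum_{i=1}^k s_i\ge 1$. There are $k$ players who independently each open one cereal box per time step; each box contains one of $n$ coupon types chosen uniformly at random, independently of everything else. Player $i$ is currently missing $s_i$ of the $n$ coupon types, and $X_i(s_i)$ is the number of boxes player $i$ must open until they have all $n$ types. Let $P_1(s_1,\dots,s_k)$ be the probability that the first player is the slowest to complete the collection, i.e. that $X_1(s_1)=\max\{X_1(s_1),\dots,X_k(s_k)\}$. Then $$P_1(s_1,\dots,s_k)=\frac{s_1}{\sum_{i=1}^k s_i}+o(1).$$
   Context: The term $o(1)$ denotes a quantity tending to $0$ as $n\to\infty$ with $k$ and $s_1,\dots,s_k$ fixed. *)

(* Defs.v *)
From HB Require Import structures.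
From mathcomp Require Import all_boot all_order all_algebra.
From mathcomp Require Import all_classical all_reals all_analysis.
Set Implicit Arguments. Unset Strict Implicit. Unset Printing Implicit Defensive.
Import Order.TTheory GRing.Theory Num.Theory.
Import numFieldNormedType.Exports.
Local Open Scope ring_scope.

(* Horizon T: box j (j < T) of player i
   has content w (i, j), w uniform over {ffun 'I_k * 'I_T -> 'I_n}
   (i.e. all contents i.i.d. uniform).  Player i initially owns all types
   c with s i <= c, i.e. is missing exactly the s i types 0,...,s i - 1
   (for s i <= n; by symmetry the identity of the missing types is irrelevant). *)

Definition collected (n k : nat) (s : 'I_k -> nat) (T : nat)
    (w : {ffun 'I_k * 'I_T -> 'I_n}) (i : 'I_k) (t : nat) : {set 'I_n} :=
  [set c : 'I_n | (s i <= c)%N] :|: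
  [set c : 'I_n | [exists j : 'I_T, (j < t)%N && (w (i, j) == c)]].

Definition done_by (n k : nat) (s : 'I_k -> nat) (T : nat)
    (w : {ffun 'I_k * 'I_T -> 'I_n}) (i : 'I_k) (t : nat) : bool :=
  collected s w i t == [set: 'I_n]%SET.

(* Event (within horizon T): every player finishes by time T and player i0
   is (weakly) the slowest: X_{i0} >= X_i for all i, i.e. whenever i0 is
   done by time t, so is every i. *)
Definition slowest_event (n k : nat) (s : 'I_k -> nat) (i0 : 'I_k) (T : nat)
    : {set {ffun 'I_k * 'I_T -> 'I_n}} :=
  finset (fun w : {ffun 'I_k * 'I_T -> 'I_n} =>
    [forall i : 'I_k, done_by s w i T] &&
    [forall i : 'I_k, [forall t : 'I_T.+1,
       implb (done_by s w i0 t) (done_by s w i t)] ]).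

Definition prob_slowest_T (R : realType) (n k : nat) (s : 'I_k -> nat)
    (i0 : 'I_k) (T : nat) : R :=
  (#|slowest_event n s i0 T|)%:R / (#|{ffun 'I_k * 'I_T -> 'I_n}|)%:R.

(* P(X_{i0} = max_i X_i): the events above increase with T to the event
   {all X_i finite and X_{i0} = max_i X_i}, so this is the limit. *)
Definition prob_slowest (R : realType) (n k : nat) (s : 'I_k -> nat)
    (i0 : 'I_k) : R :=
  limn (prob_slowest_T R n s i0 : R^nat).

(* Main.v *)
Require Import Defs.
From HB Require Import structures.
From mathcomp Require Import all_boot all_order all_algebra.
From mathcomp Require Import ring lra zify.
From Stdlib Require FunctionalExtensionality.
Import Order.TTheory GRing.Theory Num.Theory.

Module CouponLib.
Set Implicit Arguments. Unset Strict Implicit. Unset Printing Implicit Defensive.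

Section Comb.
Variables (n k : nat).
Local Notation W T := {ffun 'I_k * 'I_T -> 'I_n}.
Local Notation V := {ffun 'I_k -> 'I_n}.

Definition gcoll (A : 'I_k -> {set 'I_n}) T (w : W T) i t : {set 'I_n} :=
  A i :|: [set c : 'I_n | [exists j : 'I_T, (j < t)%N && (w (i, j) == c)]].
Definition gdone A T (w : W T) i t := gcoll A w i t == [set: 'I_n].
Definition gev A (i0 : 'I_k) T : {set W T} :=
  finset (fun w : W T => [forall i, gdone A w i T] &&
    [forall i : 'I_k, [forall t : 'I_T.+1, implb (gdone A w i0 t) (gdone A w i t)]]).

Lemma slowest_gev (s : 'I_k -> nat) i0 T :
  slowest_event n s i0 T = gev (fun i => [set c : 'I_n | (s i <= c)%N]) i0 T.
Proof. by []. Qed.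

Definition hd T (w : W T.+1) : V := [ffun i => w (i, ord0)].
Definition tl T (w : W T.+1) : W T := [ffun p => w (p.1, lift ord0 p.2)].
Definition join T (p : V * W T) : W T.+1 :=
  [ffun q : 'I_k * 'I_T.+1 => match unlift ord0 q.2 with
     None => p.1 q.1 | Some j => p.2 (q.1, j) end].

Lemma joinK T : cancel (@join T) (fun w => (hd w, tl w)).
Proof.
case=> v w /=; congr pair; apply/ffunP => x; rewrite !ffunE /=.
  by rewrite unlift_none.
by rewrite liftK; case: x.
Qed.

Lemma splitK T : cancel (fun w => (hd w, tl w)) (@join T).
Proof.
move=> w; apply/ffunP => -[i j]; rewrite !ffunE /=.
by case: unliftP => [j'|] -> /=; rewrite ?ffunE.
Qed.

Definition Aext (A : 'I_k -> {set 'I_n}) (v : V) := fun i => A i :|: [set v i].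

Lemma gcoll0 T (w : W T) A i : gcoll A w i 0 = A i.
Proof.
rewrite /gcoll; apply/setP => c; rewrite !inE.
case: (c \in A i) => //=; by apply/existsP => -[j].
Qed.

Lemma gcollS T (w : W T.+1) A i t :
  gcoll A w i t.+1 = gcoll (Aext A (hd w)) (tl w) i t.
Proof.
rewrite /gcoll /Aext; apply/setP => c; rewrite !inE -orbA; congr orb.
apply/existsP/idP.
  case=> j /andP[jt /eqP wj]; case: (unliftP ord0 j) wj jt => [j'|] -> wj jt.
    apply/orP; right; apply/existsP; exists j'; rewrite ffunE /= wj eqxx andbT.
    by rewrite lift0 in jt.
  by rewrite ffunE wj eqxx.
case/orP.
  rewrite ffunE => /eqP wc; exists ord0; by rewrite wc eqxx.
case/existsP => j /andP[jt]; rewrite ffunE /= => wj; exists (lift ord0 j).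
by rewrite lift0 ltnS jt wj.
Qed.

Lemma forall_ordS m (P : nat -> bool) :
  [forall t : 'I_m.+1, P t] = P 0%N && [forall t : 'I_m, P t.+1].
Proof.
apply/forallP/andP.
  move=> H; split; first exact: (H ord0).
  by apply/forallP => t; have := H (lift ord0 t); rewrite lift0.
case=> H0 /forallP H t; case: (unliftP ord0 t) => [t'|] ->; last by [].
by rewrite lift0; apply: H.
Qed.

Definition cond0 (A : 'I_k -> {set 'I_n}) i0 :=
  [forall i, implb (A i0 == [set: 'I_n]) (A i == [set: 'I_n])].

Lemma gevS A i0 T (w : W T.+1) :
  (w \in gev A i0 T.+1) = cond0 A i0 && (tl w \in gev (Aext A (hd w)) i0 T).
Proof.
rewrite !inE /gdone.
have E1 : forall i t, (gcoll A w i t.+1 == setT) = (gcoll (Aext A (hd w)) (tl w) i t == setT).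
  by move=> i t; rewrite gcollS.
under eq_forallb => i do rewrite E1.
case: [forall i, _]; rewrite ?andbF //=.
have E2 : forall i, [forall t : 'I_T.+2, implb (gcoll A w i0 t == setT) (gcoll A w i t == setT)]
  = implb (A i0 == setT) (A i == setT) &&
    [forall t : 'I_T.+1, implb (gcoll (Aext A (hd w)) (tl w) i0 t == setT)
                                (gcoll (Aext A (hd w)) (tl w) i t == setT)].
  move=> i; rewrite (forall_ordS _ (fun t => implb (gcoll A w i0 t == setT) (gcoll A w i t == setT))).
  by rewrite !gcoll0; under eq_forallb => t do rewrite !E1.
under eq_forallb => i do rewrite E2.
rewrite /cond0.
apply/forallP/andP.
  by move=> H; split; apply/forallP => i; case/andP: (H i).
by case=> /forallP H1 /forallP H2 i; rewrite H1 H2.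
Qed.

Lemma card_gevS A i0 T :
  #|gev A i0 T.+1| = (\sum_(v : V) cond0 A i0 * #|gev (Aext A v) i0 T|)%N.
Proof.
rewrite -sum1_card big_mkcond /=.
rewrite (reindex (@join T)); last first.
  by exists (fun w => (hd w, tl w)) => x _; [apply: joinK | apply: splitK].
rewrite -(pair_bigA _ (fun v w => if join (v, w) \in gev A i0 T.+1 then 1 else 0))%N /=.
apply: eq_bigr => v _.
have Hh : forall w : W T, hd (join (v, w)) = v by move=> w; have := joinK (v, w); case.
have Ht : forall w : W T, tl (join (v, w)) = w by move=> w; have := joinK (v, w); case.
under eq_bigr => w _ do rewrite gevS Hh Ht.
case: (cond0 A i0) => /=; last by rewrite big1 // mul0n.
by rewrite mul1n -sum1_card [RHS]big_mkcond.
Qed.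

End Comb.
Section Count.
Variables (n k : nat).
Local Notation V := {ffun 'I_k -> 'I_n}.

Lemma card_fam (F : 'I_k -> pred 'I_n) :
  #|[set v : V | [forall i, v i \in F i]]| = (\prod_i #|F i|)%N.
Proof.
have -> : (\prod_i #|F i|)%N = foldr muln 1 [seq #|F x| | x : 'I_k].
  by rewrite foldrE big_map big_enum.
rewrite -(card_family F); apply: eq_card => v; rewrite inE.
apply/forallP/familyP => H i; exact: H.
Qed.

Lemma count1 (B : {set 'I_n}) (j : 'I_k) :
  (#|[set v : V | v j \in B]| * n = #|B| * n ^ k)%N.
Proof.
pose F := fun i : 'I_k => if i == j then mem B else mem predT.
have -> : [set v : V | v j \in B] = [set v : V | [forall i, v i \in F i]].
  apply/setP => v; rewrite !inE; apply/idP/forallP.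
    by move=> H i; rewrite /F; case: eqP => [->|]. 
  by move=> /(_ j); rewrite /F eqxx.
rewrite card_fam (bigD1 j) //= {1}/F eqxx.
have -> : (\prod_(i | i != j) #|F i| = \prod_(i | i != j) n)%N.
  by apply: eq_bigr => i /negbTE; rewrite /F => ->; rewrite card_ord.
rewrite prod_nat_const -mulnA -expnSr.
have -> : #|[pred i | i != j]| = k.-1 by rewrite -[in RHS](card_ord k) -(cardC1 j).
by clear F; case: k j => [[]|kk].
Qed.

Lemma count2 (B C : {set 'I_n}) (j l : 'I_k) : j != l ->
  (#|[set v : V | (v j \in B) && (v l \in C)]| * n ^ 2 = #|B| * #|C| * n ^ k)%N.
Proof.
move=> jl.
pose F := fun i : 'I_k => if i == j then mem B else if i == l then mem C else mem predT.
have -> : [set v : V | (v j \in B) && (v l \in C)] = [set v : V | [forall i, v i \in F i]].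
  apply/setP => v; rewrite !inE; apply/idP/forallP.
    case/andP=> H1 H2 i; rewrite /F; case: eqP => [->|] //. 
    by case: eqP => [->|].
  move=> H; have := H j; have := H l; rewrite /F eqxx (negbTE jl) eq_sym (negbTE jl) eqxx.
  by move=> -> ->.
rewrite card_fam (bigD1 j) //= (bigD1 l) /=; last by rewrite eq_sym.
rewrite {1}/F eqxx {1}/F eq_sym (negbTE jl) eqxx.
have -> : (\prod_(i | (i != j) && (i != l)) #|F i| = \prod_(i | (i != j) && (i != l)) n)%N.
  by apply: eq_bigr => i /andP[/negbTE H1 /negbTE H2]; rewrite /F H1 H2 card_ord.
rewrite prod_nat_const mulnA -mulnA -expnD.
have -> : #|[pred i | (i != j) && (i != l)]| = k - 2.
  have := cardC1 j; rewrite card_ord (cardD1 l) inE eq_sym jl /= => H.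
  have -> : k - 2 = k.-1.-1 by rewrite -subn1 -subn1 -subnDA.
  rewrite -H add1n /=.
  by apply: eq_card => i; rewrite !inE andbC.
have k2 : (2 <= k)%N.
  have := card_ord k; rewrite (cardD1 j) (cardD1 l) !inE eq_sym jl /=.
  by move=> <-.
by rewrite subnK.
Qed.

End Count.
Section Drift.
Variable (RT : realFieldType).
Variables (n k : nat) (i0 : 'I_k).
Local Notation V := {ffun 'I_k -> 'I_n}.
Local Open Scope ring_scope.

Definition PhiR (r : 'I_k -> nat) : RT :=
  if (\sum_i r i == 0)%N then 1 else (r i0)%:R / (\sum_i r i)%:R.

Lemma PhiR_ge0 r : 0 <= PhiR r.
Proof. by rewrite /PhiR; case: eqP => // _; rewrite divr_ge0. Qed.

Lemma PhiR_le1 r : PhiR r <= 1.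
Proof.
rewrite /PhiR; case: eqP => // /eqP H.
rewrite ler_pdivrMr ?ltr0n ?lt0n // mul1r ler_nat.
by rewrite (bigD1 i0) //= leq_addr.
Qed.

Definition rr (A : 'I_k -> {set 'I_n}) i := #|~: A i|.
Definition tot A := (\sum_i rr A i)%N.
Definition Hv (A : 'I_k -> {set 'I_n}) (v : V) := [set j | v j \notin A j].

Lemma rr_Aext A v i : rr (Aext A v) i = (rr A i - (i \in Hv A v))%N.
Proof.
rewrite /rr /Aext /Hv inE setCU.
rewrite [in RHS](cardsD1 (v i)) inE addKn.
by apply: eq_card => c; rewrite !inE andbC.
Qed.

Definition PhiA A := PhiR (rr A).
Definition psi A (j : 'I_k) := PhiR (fun i => (rr A i - (i == j))%N).

Definition err A v := PhiA (Aext A v) - PhiA A - \sum_(j in Hv A v) (psi A j - PhiA A).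

Lemma dist01 (a b : RT) : 0 <= a <= 1 -> 0 <= b <= 1 -> `|a - b| <= 1.
Proof. move=> /andP[? ?] /andP[? ?]; rewrite ler_norml; apply/andP; split; lra. Qed.

Lemma aux2 m : (2 <= m)%N -> (1 + m <= 2 * (m * m.-1))%N.
Proof. by case: m => [|[|m']] //= _; nia. Qed.

Lemma err_bound A v :
  `|err A v| <= 2 * (#|Hv A v| * (#|Hv A v|).-1)%:R.
Proof.
rewrite /err.
have [H0|H1|H2] : [\/ #|Hv A v| = 0%N, #|Hv A v| = 1%N | (2 <= #|Hv A v|)%N].
- by case: #|Hv A v| => [|[|m]]; [constructor 1|constructor 2|constructor 3].
- have E : Hv A v = set0 by apply/cards0_eq.
  rewrite E big_set0 /PhiA.
  have -> : rr (Aext A v) = rr A by apply: FunctionalExtensionality.functional_extensionality => i; rewrite rr_Aext E inE subn0.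
  by rewrite !subrr normr0 mulr_ge0.
- have [j E] : exists j, Hv A v = [set j] by apply/cards1P/eqP.
  rewrite E big_set1 /PhiA /psi.
  have -> : rr (Aext A v) = (fun i => (rr A i - (i == j))%N).
    by apply: FunctionalExtensionality.functional_extensionality => i; rewrite rr_Aext E inE.
  by rewrite subrr normr0 mulr_ge0.
- set m := #|Hv A v|.
  have P1 := PhiR_ge0 (rr (Aext A v)); have P2 := PhiR_le1 (rr (Aext A v)).
  have P3 := PhiR_ge0 (rr A); have P4 := PhiR_le1 (rr A).
  have Hs : `|\sum_(j in Hv A v) (psi A j - PhiA A)| <= m%:R.
    apply: le_trans (ler_norm_sum _ _ _) _.
    rewrite /m -sum1_card natr_sum; apply: ler_sum => j _.
    by apply: dist01; rewrite ?PhiR_ge0 ?PhiR_le1.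
  have Hd : `|PhiA (Aext A v) - PhiA A| <= 1.
    by apply: dist01; rewrite ?PhiR_ge0 ?PhiR_le1.
  apply: le_trans (ler_normB _ _) _.
  apply: le_trans (lerD Hd Hs) _.
  have : (1 + m <= 2 * (m * m.-1))%N.
    by apply: aux2.
  by rewrite -(ler_nat RT) natrD natrM.
Qed.


Lemma sum_H A (d : 'I_k -> RT) :
  \sum_(v : V) \sum_(j in Hv A v) d j = \sum_j d j * #|[set v : V | v j \in ~: A j]|%:R.
Proof.
under eq_bigr => v _ do rewrite big_mkcond /=.
rewrite exchange_big /=; apply: eq_bigr => j _.
rewrite -big_mkcond /=.
rewrite (eq_bigl (fun v => v \in [set v : V | v j \in ~: A j])); last by move=> v; rewrite !inE.
by rewrite sumr_const mulr_natr.
Qed.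

Lemma sum_sub1 (r : 'I_k -> nat) j : (0 < r j)%N ->
  (\sum_i (r i - (i == j)) = (\sum_i r i) - 1)%N.
Proof.
move=> rj; rewrite (bigD1 j) //= [in RHS](bigD1 j) //= eqxx.
have -> : (\sum_(i | i != j) (r i - (i == j)) = \sum_(i | i != j) r i)%N.
  by apply: eq_bigr => i /negbTE ->; rewrite subn0.
by rewrite addnC addnBA // addnC.
Qed.

Lemma mart A : (0 < rr A i0)%N ->
  \sum_j (rr A j)%:R * psi A j = (tot A)%:R * PhiA A.
Proof.
move=> r0.
have totE : tot A = (rr A i0 + \sum_(i | i != i0) rr A i)%N by rewrite /tot (bigD1 i0).
have tot0 : tot A != 0%N by rewrite totE; case: (rr A i0) r0.
have -> : (tot A)%:R * PhiA A = (rr A i0)%:R :> RT.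
  by rewrite /PhiA /PhiR -/(tot A) (negbTE tot0) mulrC divfK // pnatr_eq0.
have [t1|t2] : tot A = 1%N \/ (2 <= tot A)%N.
  by case: (tot A) tot0 => [|[|m]] //; [left|right].
- have r1 : rr A i0 = 1%N by move: totE r0; rewrite t1; case: (rr A i0) => [|[|]].
  have z : forall j, j != i0 -> rr A j = 0%N.
    move=> j ji; move: totE; rewrite t1 r1 => /eqP; rewrite -{1}[1%N]addn0 eqn_add2l eq_sym.
    by rewrite sum_nat_eq0 => /forallP /(_ j); rewrite ji /= => /eqP.
  rewrite (bigD1 i0) //= big1 ?addr0; last by move=> j /z ->; rewrite mul0r.
  rewrite r1 mul1r /psi /PhiR sum_sub1 -/(tot A); last by rewrite r1.
  by rewrite t1.
- have E : forall j, (rr A j)%:R * psi A j =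
      (rr A j)%:R * ((rr A i0)%:R - (i0 == j)%:R) / (tot A - 1)%:R :> RT.
    move=> j; case: (posnP (rr A j)) => [->|rj]; first by rewrite !mul0r.
    rewrite /psi /PhiR sum_sub1 // -/(tot A).
    have -> : (tot A - 1 == 0)%N = false by apply/negbTE; rewrite subn_eq0 -ltnNge.
    rewrite mulrA; congr (_ * _ / _).
    rewrite natrB //; last by case: (i0 == j); rewrite // lt0n.
  under eq_bigr => j _ do rewrite E.
  rewrite -mulr_suml.
  under eq_bigr => j _ do rewrite mulrBr.
  rewrite sumrB -mulr_suml.
  have -> : \sum_j (rr A j)%:R * (i0 == j)%:R = (rr A i0)%:R :> RT.
    rewrite (bigD1 i0) //= eqxx mulr1 big1 ?addr0 //.
    by move=> j; rewrite eq_sym => /negbTE ->; rewrite mulr0.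
  rewrite -natr_sum -/(tot A) natrB; last by apply: ltnW.
  have -> : (tot A)%:R * (rr A i0)%:R - (rr A i0)%:R = ((tot A)%:R - 1) * (rr A i0)%:R :> RT by ring.
  rewrite mulrC mulKf //.
  by rewrite subr_eq0 pnatr_eq1; case: (tot A) t2 => [|[|]].
Qed.


Lemma sum_bool (T : finType) (P : pred T) : (\sum_x (P x : nat) = #|[set x | P x]|)%N.
Proof.
rewrite -sum1_card [RHS]big_mkcond; apply: eq_bigr => x _; rewrite inE; by case: (P x).
Qed.

Lemma card_mm (H : {set 'I_k}) :
  (#|H| * (#|H|).-1 = \sum_j \sum_(l | l != j) ((j \in H) && (l \in H) : nat))%N.
Proof.
have E : forall j, (\sum_(l | l != j) ((j \in H) && (l \in H) : nat) =
    (j \in H) * #|H :\ j|)%N.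
  move=> j; case: (j \in H) => /=; last by rewrite big1 // mul0n.
  rewrite mul1n -sum1_card [RHS]big_mkcond /= [in RHS](bigD1 j) //= !inE eqxx /= add0n.
  by apply: eq_bigr => l lj; rewrite !inE lj /=; case: (l \in H).
under eq_bigr => j _ do rewrite E.
have -> : (\sum_j (j \in H) * #|H :\ j| = \sum_(j in H) (#|H|).-1)%N.
  rewrite [RHS]big_mkcond; apply: eq_bigr => j _; case: ifP => jH; last by rewrite mul0n.
  by rewrite mul1n (cardsD1 j H) jH.
by rewrite sum_nat_const mulnC.
Qed.


Lemma nbig_distrl (I : Type) (r : seq I) (P : pred I) (F : I -> nat) a :
  ((\sum_(i <- r | P i) F i) * a = \sum_(i <- r | P i) F i * a)%N.
Proof. exact: big_distrl. Qed.
Lemma nbig_distrr (I : Type) (r : seq I) (P : pred I) (F : I -> nat) a :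
  (a * (\sum_(i <- r | P i) F i) = \sum_(i <- r | P i) a * F i)%N.
Proof. exact: big_distrr. Qed.

Lemma sum_mm A :
  ((\sum_(v : V) #|Hv A v| * (#|Hv A v|).-1) * n ^ 2 <= tot A ^ 2 * n ^ k)%N.
Proof.
under eq_bigr => v _ do rewrite card_mm.
rewrite exchange_big /=.
under eq_bigr => j _ do rewrite exchange_big /=.
have E : forall j l, j != l ->
  ((\sum_(v : V) ((j \in Hv A v) && (l \in Hv A v) : nat)) * n ^ 2 = rr A j * rr A l * n ^ k)%N.
  move=> j l jl; rewrite sum_bool -(count2 (~: A j) (~: A l) jl).
  by congr (_ * _)%N; apply: eq_card => v; rewrite !inE.
rewrite nbig_distrl /=.
apply: (@leq_trans (\sum_j \sum_l rr A j * rr A l * n ^ k)%N).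
  apply: leq_sum => j _; rewrite nbig_distrl /=.
  rewrite [X in (_ <= X)%N](bigD1 j) //=.
  apply: leq_trans (leq_addl _ _); apply: eq_leq; apply: eq_bigr => l lj.
  by rewrite E // eq_sym.
rewrite /tot expnS expn1 nbig_distrl nbig_distrl /=; apply: eq_leq; apply: eq_bigr => j _.
rewrite nbig_distrr nbig_distrl /=; apply: eq_bigr => l _.
by rewrite mulnAC.
Qed.


Hypothesis n0 : (0 < n)%N.
Let N : RT := (n ^ k)%:R.

Lemma card_V : #|{: V}| = (n ^ k)%N.
Proof. by rewrite card_ffun !card_ord. Qed.

Lemma card1R A j : #|[set v : V | v j \in ~: A j]|%:R = (rr A j)%:R * N / n%:R :> RT.
Proof.
have nz : n%:R != 0 :> RT by rewrite pnatr_eq0 -lt0n.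
apply: (mulIf nz); rewrite divfK // -natrM count1 natrM.
by [].
Qed.

Lemma Hv_le A v i : ((i \in Hv A v) <= rr A i)%N.
Proof.
rewrite /Hv inE; case H: (v i \in A i) => //=; rewrite /rr card_gt0; apply/set0Pn; exists (v i).
by rewrite inE H.
Qed.

Lemma rr_AextR A v i : (rr (Aext A v) i)%:R = (rr A i)%:R - (i \in Hv A v)%:R :> RT.
Proof. by rewrite rr_Aext natrB // Hv_le. Qed.

Lemma tot_Aext_sum A :
  \sum_(v : V) (tot (Aext A v))%:R = N * (tot A)%:R - N * (tot A)%:R / n%:R.
Proof.
have E : forall v, (tot (Aext A v))%:R = (tot A)%:R - \sum_(j in Hv A v) (1 : RT).
  move=> v; rewrite /tot !natr_sum.
  under eq_bigr => i _ do rewrite rr_AextR.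
  rewrite sumrB; congr (_ - _).
  by rewrite [RHS]big_mkcond; apply: eq_bigr => i _; case: (i \in Hv A v).
under eq_bigr => v _ do rewrite E.
rewrite sumrB sum_H sumr_const card_V; congr (_ - _).
  by rewrite /N mulr_natl.
rewrite /tot natr_sum mulr_sumr mulr_suml; apply: eq_bigr => j _.
by rewrite card1R mul1r [_ * N]mulrC.
Qed.

Lemma drift A : (0 < rr A i0)%N ->
  `| (\sum_(v : V) PhiA (Aext A v)) / N - PhiA A | <= 2 * (tot A)%:R ^+ 2 / n%:R ^+ 2.
Proof.
move=> r0.
have Np : 0 < N by rewrite ltr0n expn_gt0 n0.
have nz : n%:R != 0 :> RT by rewrite pnatr_eq0 -lt0n.
have E1 : forall v, PhiA (Aext A v) =
    PhiA A + \sum_(j in Hv A v) (psi A j - PhiA A) + err A v.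
  by move=> v; rewrite /err; ring.
have E2 : \sum_(v : V) \sum_(j in Hv A v) (psi A j - PhiA A) = 0.
  rewrite sum_H.
  under eq_bigr => j _ do rewrite card1R.
  have -> : \sum_j (psi A j - PhiA A) * ((rr A j)%:R * N / n%:R) =
     (N / n%:R) * (\sum_j (rr A j)%:R * psi A j - (tot A)%:R * PhiA A).
    rewrite mulrBr mulr_sumr /tot natr_sum mulr_suml mulr_sumr -sumrB.
    by apply: eq_bigr => j _; ring.
  by rewrite mart // subrr mulr0.
have E3 : \sum_(v : V) PhiA (Aext A v) = N * PhiA A + \sum_(v : V) err A v.
  under eq_bigr => v _ do rewrite E1.
  rewrite !big_split /= E2 addr0 sumr_const card_V mulr_natl.
  by [].
rewrite E3.
have -> : (N * PhiA A + \sum_(v : V) err A v) / N - PhiA A = (\sum_(v : V) err A v) / N.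
  by rewrite mulrDl [N * _]mulrC mulfK ?gt_eqF // addrC addKr.
rewrite normrM [`|N^-1|]ger0_norm ?invr_ge0 ?(ltW Np) // mulrC.
apply: (@le_trans _ _ (N^-1 * (2 * \sum_(v : V) (#|Hv A v| * (#|Hv A v|).-1)%:R))).
  rewrite ler_pM2l ?invr_gt0 //.
  apply: le_trans (ler_norm_sum _ _ _) _.
  rewrite mulr_sumr; apply: ler_sum => v _; exact: err_bound.
have H := sum_mm A.
rewrite -(ler_nat RT) [(tot A ^ 2 * _)%N]lock natrM natr_sum -lock natrM !natrX -/N in H.
have HN : N = n%:R ^+ k by rewrite /N natrX.
rewrite -HN in H.
set X := \sum_(v : V) _ in H *.
have HX : X <= (tot A)%:R ^+ 2 * N / n%:R ^+ 2.
  by rewrite ler_pdivlMr ?exprn_gt0 ?ltr0n.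
have -> : 2 * (tot A)%:R ^+ 2 / n%:R ^+ 2 = N^-1 * (2 * ((tot A)%:R ^+ 2 * N / n%:R ^+ 2)).
  by field; rewrite nz -/N gt_eqF.
rewrite ler_pM2l ?invr_gt0 // ler_pM2l //.
Qed.

End Drift.
Section Main.
Variable (RT : realFieldType).
Variables (n k : nat) (i0 : 'I_k).
Hypothesis n0 : (0 < n)%N.
Local Notation V := {ffun 'I_k -> 'I_n}.
Local Open Scope ring_scope.
Let N : RT := (n ^ k)%:R.

Definition P T (A : 'I_k -> {set 'I_n}) : RT :=
  #|gev A i0 T|%:R / #|{ffun 'I_k * 'I_T -> 'I_n}|%:R.

Lemma card_W T : #|{ffun 'I_k * 'I_T -> 'I_n}| = (n ^ (k * T))%N.
Proof. by rewrite card_ffun card_prod !card_ord. Qed.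

Lemma Np : 0 < N.
Proof. by rewrite ltr0n expn_gt0 n0. Qed.

Lemma P_ge0 T A : 0 <= P T A.
Proof. by rewrite /P divr_ge0. Qed.

Lemma P_S T A : P T.+1 A =
  if cond0 A i0 then (\sum_(v : V) P T (Aext A v)) / N else 0.
Proof.
rewrite /P card_gevS card_W natr_sum.
have nz : (n ^ (k * T))%:R != 0 :> RT by rewrite pnatr_eq0 -lt0n expn_gt0 n0.
case: (cond0 A i0).
  rewrite -mulr_suml card_W; under eq_bigr => v _ do rewrite mul1n.
  rewrite mulnS expnD natrM -/N; field.
  by rewrite nz gt_eqF ?Np.
by rewrite big1 ?mul0r // => v _; rewrite mul0n.
Qed.

Definition allfull (A : 'I_k -> {set 'I_n}) := [forall i, A i == [set: 'I_n]].

Lemma gcoll_W0 (w : {ffun 'I_k * 'I_0 -> 'I_n}) A i t : gcoll A w i t = A i.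
Proof.
apply/setP => c; rewrite /gcoll !inE; case: (c \in A i) => //=.
by apply/existsP => -[[]].
Qed.

Lemma P_0 A : P 0 A = if allfull A then 1 else 0.
Proof.
rewrite /P card_W muln0 expn0 divr1.
have E : forall w, (w \in gev A i0 0) = allfull A.
  move=> w; rewrite inE /gdone.
  under eq_forallb => i do rewrite gcoll_W0.
  rewrite -/(allfull A); case: (boolP (allfull A)) => H //=.
  have H' : forall i, A i == [set: 'I_n] by apply/forallP.
  apply/forallP => i; apply/forallP => t; rewrite !gcoll_W0. by rewrite (H' i) implybT.
rewrite (eq_card E).
case: (allfull A).
  by rewrite -[#|xpredT|]/#|{ffun 'I_k * 'I_0 -> 'I_n}| card_W muln0 expn0.
by rewrite eq_card0.
Qed.

Lemma setC_eqT (A : {set 'I_n}) : (~: A == set0) = (A == [set: 'I_n]).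
Proof.
apply/eqP/eqP => H; first by rewrite -(setCK A) H setC0.
by rewrite H setCT.
Qed.

Lemma allfull_tot (A : 'I_k -> {set 'I_n}) : allfull A = (tot A == 0)%N.
Proof.
rewrite /tot sum_nat_eq0 /allfull; apply: eq_forallb => i.
by rewrite /rr cards_eq0 setC_eqT.
Qed.

Lemma Aext_full (A : 'I_k -> {set 'I_n}) (v : V) : allfull A -> Aext A v = A.
Proof.
move=> /forallP H; apply: FunctionalExtensionality.functional_extensionality => i.
by rewrite /Aext (eqP (H i)) setTU.
Qed.

Lemma tot_Aext_le (A : 'I_k -> {set 'I_n}) (v : V) : (tot (Aext A v) <= tot A)%N.
Proof. by apply: leq_sum => i _; rewrite rr_Aext leq_subr. Qed.

Lemma cond0_pos (A : 'I_k -> {set 'I_n}) : (0 < rr A i0)%N -> cond0 A i0.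
Proof.
move=> H; apply/forallP => i; suff -> : (A i0 == [set: 'I_n]) = false by [].
by apply/negbTE; rewrite -setC_eqT -cards_eq0 -lt0n.
Qed.

Lemma cond0_zero (A : 'I_k -> {set 'I_n}) : rr A i0 = 0%N -> (0 < tot A)%N -> cond0 A i0 = false.
Proof.
move=> H0 Ht; apply/negbTE/forallP => H.
have : allfull A.
  apply/forallP => i; have := H i.
  have -> : (A i0 == [set: 'I_n]) by rewrite -setC_eqT -cards_eq0 -/(rr A i0) H0.
  by [].
by rewrite allfull_tot => /eqP Ht0; rewrite Ht0 in Ht.
Qed.

Lemma P_mono T A : P T A <= P T.+1 A.
Proof.
elim: T A => [|T IH] A.
  rewrite P_S; case: (boolP (allfull A)) => H.
    have -> : cond0 A i0.
      by apply/forallP => i; move/forallP: H => H; rewrite (H i) implybT.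
    under eq_bigr => v _ do rewrite Aext_full //.
    by rewrite sumr_const card_V -mulr_natr -/N mulfK ?gt_eqF ?Np.
  by rewrite P_0 (negbTE H); case: ifP => _; rewrite // divr_ge0 // sumr_ge0 // => v _; apply: P_ge0.
rewrite (P_S T.+1) (P_S T); case: ifP => // _.
by rewrite ler_pM2r ?invr_gt0 ?Np //; apply: ler_sum => v _; apply: IH.
Qed.


Lemma PhiA_tot0 (A : 'I_k -> {set 'I_n}) : tot A = 0%N -> PhiA RT i0 A = 1.
Proof. by move=> H; rewrite /PhiA /PhiR -/(tot A) H. Qed.

Lemma PhiA_r0 (A : 'I_k -> {set 'I_n}) : rr A i0 = 0%N -> (0 < tot A)%N -> PhiA RT i0 A = 0.
Proof.
move=> H Ht; rewrite /PhiA /PhiR -/(tot A); case: eqP => [E|_].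
  by rewrite E in Ht.
by rewrite H mul0r.
Qed.

Lemma avg_tot (A : 'I_k -> {set 'I_n}) :
  (\sum_(v : V) (tot (Aext A v))%:R) / N = (tot A)%:R - (tot A)%:R / n%:R :> RT.
Proof.
rewrite (tot_Aext_sum RT n0) -/N.
have := Np; move=> Hn; field; by rewrite pnatr_eq0 -lt0n n0 /= -/N gt_eqF.
Qed.

Lemma bounds (S0 : nat) T : forall A : 'I_k -> {set 'I_n}, (tot A <= S0)%N ->
  P T A <= PhiA RT i0 A + 2 * S0%:R * (tot A)%:R / n%:R /\
  PhiA RT i0 A - 2 * S0%:R * (tot A)%:R / n%:R - (tot A)%:R * (1 - n%:R^-1) ^+ T <= P T A.
Proof.
set c : RT := 2 * S0%:R.
set q : RT := 1 - n%:R^-1.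
have nR : 0 < n%:R :> RT by rewrite ltr0n.
have q0 : 0 <= q.
  rewrite /q subr_ge0 invf_le1 // ler1n //.
have c0 : 0 <= c by rewrite /c mulr_ge0.
elim: T => [|T IH] A HA.
  rewrite P_0 allfull_tot.
  have F0 := PhiR_ge0 RT i0 (rr A); have F1 := PhiR_le1 RT i0 (rr A).
  rewrite -/(PhiA RT i0 A) in F0 F1.
  case: eqP => [t0|t0].
    by rewrite t0 PhiA_tot0 // !mulr0 !mul0r !subr0 addr0; split.
  have t1 : 1 <= (tot A)%:R :> RT by rewrite ler1n lt0n; apply/eqP.
  have ct : 0 <= c * (tot A)%:R / n%:R by rewrite divr_ge0 ?mulr_ge0 // ltW.
  rewrite expr0 mulr1; split; lra.
have F0 := PhiR_ge0 RT i0 (rr A); have F1 := PhiR_le1 RT i0 (rr A).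
rewrite -/(PhiA RT i0 A) in F0 F1.
have ct : 0 <= c * (tot A)%:R / n%:R by rewrite divr_ge0 ?mulr_ge0 // ltW.
case: (posnP (tot A)) => [t0|tpos].
  have fA : allfull A by rewrite allfull_tot t0.
  have -> : P T.+1 A = P T A.
    rewrite P_S.
    have -> : cond0 A i0.
      by apply/forallP => i; move/forallP: fA => H; rewrite (H i) implybT.
    under eq_bigr => v _ do rewrite Aext_full //.
    by rewrite sumr_const card_V -mulr_natr -/N mulfK ?gt_eqF ?Np.
  by have := IH A HA; rewrite t0 !mul0r.
case: (posnP (rr A i0)) => [r0|rpos].
  rewrite P_S cond0_zero // PhiA_r0 //.
  have : 0 <= (tot A)%:R * q ^+ T.+1 by rewrite mulr_ge0 // exprn_ge0.
  split; lra.
rewrite P_S cond0_pos //.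
have Hd := drift RT n0 rpos; rewrite -/N in Hd.
move: Hd; rewrite ler_norml => /andP[Hd1 Hd2].
set t : RT := (tot A)%:R.
have tS : t <= S0%:R by rewrite ler_nat.
have t0' : 0 <= t by [].
have Ha : 2 * t ^+ 2 / n%:R ^+ 2 <= c * t / n%:R ^+ 2.
  apply: ler_wpM2r; first by rewrite invr_ge0 exprn_ge0 // ltW.
  rewrite /c expr2 -mulrA; apply: ler_wpM2l => //.
  by apply: ler_wpM2r.
have Hb : c / n%:R * (t - t / n%:R) = c * t / n%:R - c * t / n%:R ^+ 2.
  by field; rewrite gt_eqF.
have Hq : t * q ^+ T.+1 = q ^+ T * (t - t / n%:R).
  by rewrite exprSr /q; field; rewrite gt_eqF.
have Hsum := avg_tot A; rewrite -/t in Hsum.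
have Hle : forall v, (tot (Aext A v) <= S0)%N.
  by move=> v; apply: leq_trans (tot_Aext_le A v) HA.
split.
- apply: (@le_trans _ _ ((\sum_(v : V) (PhiA RT i0 (Aext A v) + c * (tot (Aext A v))%:R / n%:R)) / N)).
    rewrite ler_pM2r ?invr_gt0 ?Np //; apply: ler_sum => v _.
    by case: (IH _ (Hle v)).
  rewrite big_split /= mulrDl.
  have -> : \sum_(v : V) c * (tot (Aext A v))%:R / n%:R =
           c / n%:R * \sum_(v : V) (tot (Aext A v))%:R.
    by rewrite mulr_sumr; apply: eq_bigr => v _; rewrite mulrAC.
  rewrite -mulrA Hsum Hb.
  lra.
- apply: (@le_trans _ _ ((\sum_(v : V) (PhiA RT i0 (Aext A v) - c * (tot (Aext A v))%:R / n%:R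
          - (tot (Aext A v))%:R * q ^+ T)) / N)); last first.
    rewrite ler_pM2r ?invr_gt0 ?Np //; apply: ler_sum => v _.
    by case: (IH _ (Hle v)).
  rewrite !sumrB !mulrBl.
  have -> : \sum_(v : V) c * (tot (Aext A v))%:R / n%:R =
           c / n%:R * \sum_(v : V) (tot (Aext A v))%:R.
    by rewrite mulr_sumr; apply: eq_bigr => v _; rewrite mulrAC.
  have -> : \sum_(v : V) (tot (Aext A v))%:R * q ^+ T =
           q ^+ T * \sum_(v : V) (tot (Aext A v))%:R.
    by rewrite mulr_sumr; apply: eq_bigr => v _; rewrite mulrC.
  rewrite -[c / n%:R * _ / N]mulrA -[q ^+ T * _ / N]mulrA Hsum Hb -Hq.
  lra.
Qed.

End Main.

End CouponLib.

From mathcomp Require Import all_classical all_reals all_analysis.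
From mathcomp Require Import ring lra zify.
Import Order.TTheory GRing.Theory Num.Theory.
Import numFieldNormedType.Exports.
Import CouponLib.
Local Open Scope ring_scope.

Lemma card_lt (n m : nat) : (m <= n)%N -> #|[set c : 'I_n | (c < m)%N]| = m.
Proof.
move=> mn.
have -> : [set c : 'I_n | (c < m)%N] = [set widen_ord mn j | j : 'I_m].
  apply/setP => c; rewrite !inE; apply/idP/imsetP.
    by move=> cm; exists (Ordinal cm) => //; apply: val_inj.
  by case=> j _ ->; rewrite /= ltn_ord.
by rewrite card_imset ?card_ord //; by move=> a b /(congr1 val) /= ab; apply: val_inj.
Qed.

Lemma rr_s (n k : nat) (s : 'I_k -> nat) i : (s i <= n)%N ->
  rr (fun i => [set c : 'I_n | (s i <= c)%N]) i = s i.
Proof.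
move=> H; rewrite /rr -[RHS](@card_lt _ _ H); apply: eq_card => c; rewrite !inE.
by rewrite -ltnNge.
Qed.

Theorem mainTheorem4 (R : realType) (k : nat) (hk : (0 < k)%N)
    (s : 'I_k -> nat) (hS : (1 <= \sum_(i < k) s i)%N) :
  forall eps : R, 0 < eps ->
  exists N : nat, forall n : nat, (N <= n)%N ->
    `| prob_slowest R n s (Ordinal hk)
       - (s (Ordinal hk))%:R / (\sum_(i < k) s i)%:R | < eps.
Proof.
move=> eps epos.
set i0 := Ordinal hk.
set S := (\sum_(i < k) s i)%N.
set M : R := 4 * S%:R ^+ 2 / eps.
exists (S + (Num.Def.trunc M).+1)%N => n Hn.
have nS : (S <= n)%N by apply: leq_trans Hn; apply: leq_addr.
have n0 : (0 < n)%N by apply: leq_trans nS.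
have Mn : M < n%:R.
  apply: lt_le_trans (truncnS_gt M) _; rewrite ler_nat.
  by apply: leq_trans Hn; apply: leq_addl.
set A := fun i => [set c : 'I_n | (s i <= c)%N].
have sn : forall i, (s i <= n)%N.
  move=> i; apply: leq_trans nS; rewrite /S (bigD1 i) //=; apply: leq_addr.
have rrA : forall i, rr A i = s i by move=> i; apply: rr_s.
have totA : tot A = S by rewrite /tot; apply: eq_bigr => i _; apply: rrA.
have PhiE : PhiA R i0 A = (s i0)%:R / S%:R.
  rewrite /PhiA /PhiR -/(tot A) totA.
  have -> : (S == 0)%N = false by apply/negbTE; rewrite -lt0n.
  by rewrite rrA.
set u := prob_slowest_T R n s i0.
have uE : forall T, u T = P R i0 T A.
  by move=> T; rewrite /u /prob_slowest_T slowest_gev.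
have umono : {homo u : p q / (p <= q)%N >-> p <= q}.
  move=> p q; elim: q => [|q IH]; first by rewrite leqn0 => /eqP ->.
  rewrite leq_eqVlt => /orP[/eqP -> //|]; rewrite ltnS => /IH H.
  apply: le_trans H _; rewrite !uE; exact: P_mono.
set q := 1 - n%:R^-1 : R.
have B := fun T => bounds R i0 n0 T (leqnn (tot A)).
rewrite totA PhiE in B.
set c : R := 2 * S%:R * S%:R / n%:R.
have ub : forall T, u T <= (s i0)%:R / S%:R + c.
  by move=> T; rewrite uE; case: (B T).
have ucvg : cvgn u.
  apply: nondecreasing_is_cvgn => //.
  by exists ((s i0)%:R / S%:R + c) => x [T _ <-]; apply: ub.
have Lub : limn u <= (s i0)%:R / S%:R + c.
  by apply: limr_le => //; apply: nearW.
have nR : 0 < n%:R :> R by rewrite ltr0n.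
have q0 : 0 <= q by rewrite /q subr_ge0 invf_le1 // ler1n.
have q1 : `|q| < 1.
  rewrite ger0_norm // /q ltrBlDr ltrDl invr_gt0 //.
have Sp : 0 < S%:R :> R by rewrite ltr0n.
have [T HT] : exists T, S%:R * q ^+ T < eps / 2.
  have := @cvgr0_norm_lt _ _ _ _ _ _ (cvg_expr q1) _ (divr_gt0 (divr_gt0 epos (ltr0Sn _ 1)) Sp).
  case=> T0 _ HT0; exists T0; have := HT0 T0 (leqnn T0).
  rewrite ger0_norm ?exprn_ge0 //.
  by rewrite ltr_pdivlMr // mulrC.
have Llb : (s i0)%:R / S%:R - c - S%:R * q ^+ T <= limn u.
  apply: le_trans (nondecreasing_cvgn_le umono ucvg T).
  by rewrite uE; case: (B T).
have c0 : 0 <= c by rewrite /c divr_ge0 // !mulr_ge0.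
have cM : c < eps / 2.
  rewrite /c ltr_pdivrMr // -[2 * _ * _]mulrA -expr2.
  move: Mn; rewrite /M ltr_pdivrMr // => Mn'.
  lra.
rewrite /prob_slowest -/u ltr_norml; apply/andP; split; lra.
Qed.
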